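(* Under the standing assumptions and definitions in the context, let $\mathbf{x}^{(k)}\in\Gamma$ and let $\mathbf{x}^{(k+1)}=\arg\min_{\mathbf{x}\in\mathcal{F}(\mathbf{x}^{(k)})}J(\mathbf{x})$. Then $\nabla J(\mathbf{x}^{(k+1)})\cdot(\mathbf{x}^{(k)}-\mathbf{x}^{(k+1)})\ge0$. Moreover, if $J(\mathbf{x}^{(k+1)})=J(\mathbf{x}^{(k)})$, then $\mathbf{x}^{(k+1)}=\mathbf{x}^{(k)}$.
   Context: Problem: minimize $J(\mathbf{x})$ over $\mathbf{x}\in\Gamma\subset\mathbb{R}^n$, where (i) $J:\mathbb{R}^n\to\mathbb{R}^+$ is smooth and strictly convex; (ii) $\Gamma$ is connected and closed with piecewise smooth, non-self-intersecting boundary, and every point of $\Gamma$ lies in some $n$-dimensional convex polytope contained in $\Gamma$. Semi-convex decomposition: $\Gamma=\bigcap_{i=1}^N\Gamma_i$, $\Gamma_i=\{\mathbf{x}:\phi_i(\mathbf{x})\ge 0\}$, $\partial\Gamma_i=\{\mathbf{x}:\phi_i(\mathbf{x})=0\}$, where each $\phi_i:\mathbb{R}^n\to\mathbb{R}$ is continuous, piecewise smooth and semi-convex: there is a positive semidefinite $H_i^*$ such that $\mathbf{x}\mapsto\phi_i(\mathbf{x})+\frac12(\mathbf{x}-\mathbf{x}_0)^TH_i^*(\mathbf{x}-\mathbf{x}_0)$ is convex for every $\mathbf{x}_0$. One-sided directional derivative: $\partial_v\phi_i(\mathbf{x})=\lim_{a\to0^+}(\phi_i(\mathbf{x}+av)-\phi_i(\mathbf{x}))/a$.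 Sub-differential: $D\phi_i(\mathbf{x})=\{d\in\mathbb{R}^n: d\cdot v\le\partial_v\phi_i(\mathbf{x})\ \forall v\in\mathbb{R}^n\}$. It is assumed that: (1) $D\phi_i(\mathbf{x})\neq\{0\}$ for all $\mathbf{x}$; (2) $0\notin D\phi_i(\mathbf{x})$ if $\mathbf{x}\in\partial\Gamma_i$; (3) for any $\mathbf{x}$ with $I:=\{i:\phi_i(\mathbf{x})=0\}\ne\emptyset$ there is $v$ with $\partial_v\phi_i(\mathbf{x})<0$ for all $i\in I$. Optimal sub-gradients at a reference $\mathbf{x}^r$: a unit vector $v$ is a feasible search direction if for every $i$: $\phi_i(\mathbf{x}^r)>0$; or $\phi_i(\mathbf{x}^r)=0$ and some $d\in D\phi_i(\mathbf{x}^r)$ has $v\cdot d\ge0$; or $\phi_i(\mathbf{x}^r)<0$ and some $d\in D\phi_i(\mathbf{x}^r)$ has $v\cdot d>0$. Let $C(\mathbf{x}^r)$ be the set of these, and $v^*=\arg\min_{v\in C(\mathbf{x}^r)}\nabla J(\mathbf{x}^r)\cdot v$ (ties broken lexicographically). Let $DF_i=D\phi_i(\mathbf{x}^r)$ if $\phi_i(\mathbf{x}^r)>0$, $DF_i=\{d\in D\phi_i(\mathbf{x}^r):d\cdot v^*\ge0\}$ if $\phi_i(\mathbf{x}^r)=0$, $DF_i=\{d\in D\phi_i(\mathbf{x}^r):d\cdot v^*>0\}$ if $\phi_i(\mathbf{x}^r)<0$, and $\hat\nabla\phi_i(\mathbf{x}^r)=\arg\min_{d\in DF_i}\nabla J(\mathbf{x}^r)\cdot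 d/\|d\|$ (with $d/\|d\|:=0$ if $d=0$). Convex feasible set: $\mathcal{F}_i(\mathbf{x}^r)=\Gamma_i$ if $\phi_i$ is concave; $\mathcal{F}_i(\mathbf{x}^r)=\{\mathbf{x}:\phi_i(\mathbf{x}^r)+\hat\nabla\phi_i(\mathbf{x}^r)(\mathbf{x}-\mathbf{x}^r)\ge0\}$ if $\phi_i$ is convex; $\mathcal{F}_i(\mathbf{x}^r)=\{\mathbf{x}:\phi_i(\mathbf{x}^r)+\hat\nabla\phi_i(\mathbf{x}^r)(\mathbf{x}-\mathbf{x}^r)\ge\frac12(\mathbf{x}-\mathbf{x}^r)^TH_i^*(\mathbf{x}-\mathbf{x}^r)\}$ otherwise; $\mathcal{F}(\mathbf{x}^r)=\bigcap_{i=1}^N\mathcal{F}_i(\mathbf{x}^r)$. *)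

(* Defs.v *)
From HB Require Import structures.
From mathcomp Require Import all_boot all_order all_algebra.
From mathcomp Require Import all_classical all_reals all_analysis.
Set Implicit Arguments. Unset Strict Implicit. Unset Printing Implicit Defensive.
Import Order.TTheory GRing.Theory Num.Theory.
Import numFieldNormedType.Exports.
Local Open Scope classical_set_scope.
Local Open Scope ring_scope.

Section Defs.
Variables (R : realType) (n : nat).
Notation V := 'rV[R]_n.

Definition dotv (u v : V) : R := \sum_(i < n) u ord0 i * v ord0 i.
Definition enorm (u : V) : R := Num.sqrt (dotv u u).

Definition qform (H : 'M[R]_n) (u : V) : R := (u *m H *m u^T) ord0 ord0.
Definition psd (H : 'M[R]_n) : Prop := H^T = H /\ forall u : V, 0 <= qform H u.

Definition grad (f : V -> R) (x : V) : V :=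
  \row_(i < n) 'D_(delta_mx ord0 i) f x.

Fixpoint iter_dir (f : V -> R) (vs : seq V) : V -> R :=
  match vs with
  | [::] => f
  | v :: vs' => fun x => 'D_v (iter_dir f vs') x
  end.

(* C^infinity: every iterated directional derivative exists and is
   (Frechet) differentiable everywhere *)
Definition smooth (f : V -> R) : Prop :=
  forall (vs : seq V) (x : V), differentiable (iter_dir f vs) x.

Definition convex_fun (f : V -> R) : Prop :=
  forall (x y : V) (t : R), 0 <= t <= 1 ->
    f (t *: x + (1 - t) *: y) <= t * f x + (1 - t) * f y.
Definition concave_fun (f : V -> R) : Prop := convex_fun (fun x => - f x).
Definition strictly_convex (f : V -> R) : Prop :=
  forall (x y : V) (t : R), x != y -> 0 < t < 1 ->
    f (t *: x + (1 - t) *: y) < t * f x + (1 - t) * f y.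

Definition semi_convex (f : V -> R) (H : 'M[R]_n) : Prop :=
  psd H /\ forall x0 : V, convex_fun (fun x => f x + 2^-1 * qform H (x - x0)).

Definition piecewise_smooth (f : V -> R) : Prop :=
  exists (m : nat) (P : 'I_m -> set V) (g : 'I_m -> V -> R),
    (forall j, closed (P j)) /\ (forall x, exists j, P j x) /\
    (forall j, smooth (g j)) /\ (forall j x, P j x -> f x = g j x).

Definition conv_hull (m : nat) (p : 'I_m -> V) : set V :=
  [set x | exists lam : 'I_m -> R, (forall j, 0 <= lam j) /\
     \sum_(j < m) lam j = 1 /\ x = \sum_(j < m) lam j *: p j].
Definition full_dim_polytope (P : set V) : Prop :=
  exists (m : nat) (p : 'I_m -> V), P = conv_hull p /\ interior P !=set0.

Definition boundary (A : set V) : set V := closure A `\` interior A.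

Definition dir_deriv (f : V -> R) (x v : V) : R :=
  lim ((fun a : R => (f (x + a *: v) - f x) / a) @ at_right 0).
Definition subdiff (f : V -> R) (x : V) : set V :=
  [set d | forall v : V, dotv d v <= dir_deriv f x v].

Definition lex_le (u v : V) : Prop :=
  u = v \/ exists k : 'I_n, (forall j : 'I_n, (j < k)%N -> u ord0 j = v ord0 j)
                          /\ u ord0 k < v ord0 k.

Variable N : nat.
Variables (phi : 'I_N -> V -> R) (J : V -> R) (xr : V).

Definition feasible_dir (v : V) : Prop :=
  enorm v = 1 /\
  forall i : 'I_N,
    0 < phi i xr \/
    (phi i xr = 0 /\ exists2 d, subdiff (phi i) xr d & 0 <= dotv v d) \/
    (phi i xr < 0 /\ exists2 d, subdiff (phi i) xr d & 0 < dotv v d).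

Definition optimal_dir (vs : V) : Prop :=
  feasible_dir vs /\
  (forall v, feasible_dir v -> dotv (grad J xr) vs <= dotv (grad J xr) v) /\
  (forall v, feasible_dir v -> dotv (grad J xr) v = dotv (grad J xr) vs ->
     lex_le vs v).

Definition DF (vs : V) (i : 'I_N) : set V :=
  if `[< 0 < phi i xr >] then subdiff (phi i) xr
  else if `[< phi i xr = 0 >] then
    [set d | subdiff (phi i) xr d /\ 0 <= dotv d vs]
  else [set d | subdiff (phi i) xr d /\ 0 < dotv d vs].

Definition normalized (d : V) : V := if d == 0 then 0 else (enorm d)^-1 *: d.

Definition optimal_subgrad (vs : V) (i : 'I_N) (g : V) : Prop :=
  DF vs i g /\
  forall d, DF vs i d ->
    dotv (grad J xr) (normalized g) <= dotv (grad J xr) (normalized d).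

Definition Fi (H : 'I_N -> 'M[R]_n) (g : 'I_N -> V) (i : 'I_N) : set V :=
  if `[< concave_fun (phi i) >] then [set x | 0 <= phi i x]
  else if `[< convex_fun (phi i) >] then
    [set x | 0 <= phi i xr + dotv (g i) (x - xr)]
  else [set x | 2^-1 * qform (H i) (x - xr) <= phi i xr + dotv (g i) (x - xr)].

Definition Fset (H : 'I_N -> 'M[R]_n) (g : 'I_N -> V) : set V :=
  [set x | forall i, Fi H g i x].

End Defs.

(* Main.v *)
Require Import Defs.
From HB Require Import structures.
From mathcomp Require Import all_boot all_order all_algebra.
From mathcomp Require Import all_classical all_reals all_analysis.
From mathcomp Require Import ring lra.
Import Order.TTheory GRing.Theory Num.Theory.
Import numFieldNormedType.Exports.
Local Open Scope classical_set_scope.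
Local Open Scope ring_scope.

Lemma qformE (R : realType) n (H : 'M[R]_n) (u : 'rV[R]_n) :
  qform H u = \sum_j \sum_k u 0 k * H k j * u 0 j.
Proof.
rewrite /qform mxE; apply eq_bigr => j _; rewrite mxE mxE mulr_suml.
by apply eq_bigr => k _.
Qed.

Lemma qform_conv (R : realType) n (H : 'M[R]_n) (a b : 'rV[R]_n) t :
  t * qform H a + (1 - t) * qform H b =
  qform H (t *: a + (1 - t) *: b) + t * (1 - t) * qform H (a - b).
Proof.
rewrite !qformE !mulr_sumr -!big_split /=; apply eq_bigr => j _.
rewrite !mulr_sumr -!big_split /=; apply eq_bigr => k _.
rewrite !mxE; ring.
Qed.

Lemma dotv_aff (R : realType) n (g x y r : 'rV[R]_n) t :
  dotv g (t *: x + (1 - t) *: y - r) = t * dotv g (x - r) + (1 - t) * dotv g (y - r).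
Proof.
rewrite /dotv !mulr_sumr -big_split /=; apply eq_bigr => j _; rewrite !mxE; ring.
Qed.

Lemma dotv0 (R : realType) n (g : 'rV[R]_n) : dotv g 0 = 0.
Proof. by rewrite /dotv big1 // => j _; rewrite mxE mulr0. Qed.

Lemma qform0 (R : realType) n (H : 'M[R]_n) : qform H 0 = 0.
Proof. by rewrite qformE big1 // => j _; rewrite big1 // => k _; rewrite mxE !mul0r. Qed.

Lemma vec_aff (R : realType) n (x y r : 'rV[R]_n) t :
  t *: x + (1 - t) *: y - r = t *: (x - r) + (1 - t) *: (y - r).
Proof. apply/rowP => k; rewrite !mxE; ring. Qed.

Lemma aux_contra (R : realType) (a b c : R) :
  b <= a -> a < 2^-1 * b + (1 - 2^-1) * c -> b = c -> false.
Proof. move=> *; lra. Qed.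

Theorem lemma4p4 (R : realType) (n N : nat)
  (J : 'rV[R]_n -> R) (Gamma : set 'rV[R]_n)
  (phi : 'I_N -> 'rV[R]_n -> R) (H : 'I_N -> 'M[R]_n)
  (* J : R^n -> R^+ smooth and strictly convex *)
  (hJpos : forall x, 0 <= J x) (hJsmooth : smooth J) (hJconv : strictly_convex J)
  (* Gamma *)
  (hGclosed : closed Gamma) (hGconn : connected Gamma)
  (hGpoly : forall x, Gamma x ->
     exists P, full_dim_polytope P /\ P x /\ P `<=` Gamma)
  (* semi-convex decomposition *)
  (hdec : Gamma = [set x | forall i, 0 <= phi i x])
  (hbd : forall i, boundary [set x | 0 <= phi i x] = [set x | phi i x = 0])
  (hphicont : forall i, continuous (phi i))
  (hphipw : forall i, piecewise_smooth (phi i))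
  (hphisc : forall i, semi_convex (phi i) (H i))
  (hA1 : forall i x, subdiff (phi i) x <> [set 0])
  (hA2 : forall i x, phi i x = 0 -> ~ subdiff (phi i) x 0)
  (hA3 : forall x, (exists i, phi i x = 0) ->
     exists v, forall i, phi i x = 0 -> dir_deriv (phi i) x v < 0)
  (* iterates *)
  (xk xk1 : 'rV[R]_n) (hxk : Gamma xk)
  (vstar : 'rV[R]_n) (hvstar : optimal_dir phi J xk vstar)
  (ghat : 'I_N -> 'rV[R]_n)
  (hghat : forall i, optimal_subgrad phi J xk vstar i (ghat i))
  (hxk1 : Fset phi xk H ghat xk1 /\
          forall x, Fset phi xk H ghat x -> J xk1 <= J x) :
  0 <= dotv (grad J xk1) (xk - xk1) /\ (J xk1 = J xk -> xk1 = xk).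
Proof.
have hxkF : Fset phi xk H ghat xk.
  move=> i; rewrite hdec in hxk; have := hxk i.
  rewrite /Fi; case: (asboolP (concave_fun (phi i))) => _ //=.
  case: (asboolP (convex_fun (phi i))) => _ /=; rewrite subrr dotv0 addr0 //.
  by rewrite qform0 mulr0.
have Fconv : forall x y t, 0 <= t <= 1 -> Fset phi xk H ghat x ->
    Fset phi xk H ghat y -> Fset phi xk H ghat (t *: x + (1 - t) *: y).
  move=> x y t /andP[t0 t1] hx hy i; move: (hx i) (hy i).
  have t1' : 0 <= 1 - t by rewrite subr_ge0.
  rewrite /Fi; case: (asboolP (concave_fun (phi i))) => hc /=.
    move=> hxi hyi; have := hc x y t; rewrite /= t0 t1 => /(_ isT).
    have := mulr_ge0 t0 hxi; have := mulr_ge0 t1' hyi; nra.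
  case: (asboolP (convex_fun (phi i))) => hcv /=.
    move=> hxi hyi; rewrite dotv_aff.
    have := mulr_ge0 t0 hxi; have := mulr_ge0 t1' hyi; nra.
  move=> hxi hyi; rewrite dotv_aff vec_aff.
  have [[_ hpsd] _] := hphisc i.
  have h3 := @qform_conv _ _ (H i) (x - xk) (y - xk) t.
  have h4 : 0 <= t * (1 - t) * qform (H i) ((x - xk) - (y - xk)).
    by apply: mulr_ge0; [exact: mulr_ge0|exact: hpsd].
  have hA := ler_wpM2l t0 hxi; have hB := ler_wpM2l t1' hyi.
  nra.
case: hxk1 => hF1 hmin; split.
  set w := xk - xk1.
  have hd : differentiable J xk1 := hJsmooth [::] xk1.
  have hder : derivable J xk1 w by apply: diff_derivable.
  have -> : dotv (grad J xk1) w = 'D_w J xk1.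
    rewrite deriveE // [in RHS](row_sum_delta w) linear_sum /= /dotv.
    apply eq_bigr => j _; rewrite linearZ /= mxE deriveE // mulrC.
    by [].
  rewrite /derive.
  set f := (fun h : R => _).
  have hc : f @ 0^' --> lim (f @ 0^') by exact: hder.
  have hr : f @ at_right 0 --> lim (f @ 0^').
    move=> A /hc /nbhs_ballP [_ /posnumP[e] xe_A].
    by exists e%:num => //= y xe_y /gt_eqF/negbT/xe_A; exact.
  apply: (cvgr_to_ge hr).
  exists 1 => //= h; rewrite /ball /= sub0r normrN => hh h0.
  have h1 : h <= 1 by move: hh; rewrite gtr0_norm // => /ltW.
  rewrite /f /=.
  have hin : Fset phi xk H ghat (h *: w + xk1).
    have -> : h *: w + xk1 = h *: xk + (1 - h) *: xk1.
      by apply/rowP => k; rewrite /w !mxE; ring.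
    by apply: Fconv => //; rewrite (ltW h0) h1.
  have := hmin _ hin.
  rewrite -subr_ge0 => hge.
  apply: mulr_ge0 => //; rewrite invr_ge0; exact: ltW.
move=> hJe; case: (eqVneq xk1 xk) => // hne.
have ht0 : (0 : R) < 2^-1 by lra.
have ht1 : (2^-1 : R) < 1 by lra.
have := @hJconv _ _ 2^-1 hne; rewrite ht0 ht1 => /(_ isT).
have hin : Fset phi xk H ghat (2^-1 *: xk1 + (1 - 2^-1) *: xk).
  by apply: Fconv => //; rewrite (ltW ht0) (ltW ht1).
have := hmin _ hin.
move=> h1 h2; by have := @aux_contra _ _ _ _ h1 h2 hJe.
Qed.
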